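(* Let $(M_t)_{t\ge0}$ and $(N_t)_{t\ge0}$ be two $d$-dimensional processes with independent increments defined respectively on sublinear expectation spaces $(\Omega_1,\mathcal{H}_1,\hat{\mathbb{E}}_1)$ and $(\Omega_2,\mathcal{H}_2,\hat{\mathbb{E}}_2)$. Let $(X^i_t,Y^i_t)_{t\in[0,1]}$, $i\ge0$, be a sequence of $2d$-dimensional processes with independent increments defined respectively on sublinear expectation spaces $(\bar\Omega_i,\bar{\mathcal{H}}_i,\bar{\mathbb{E}}_i)$ such that $(X^i_t)_{t\in[0,1]}\overset{d}{=}(M_{i+t}-M_i)_{t\in[0,1]}$ and $(Y^i_t)_{t\in[0,1]}\overset{d}{=}(N_{i+t}-N_i)_{t\in[0,1]}$. Then there exists a $2d$-dimensional process $(\tilde M_t,\tilde N_t)_{t\ge0}$ with independent increments defined on a sublinear expectation space $(\Omega,\mathcal{H},\hat{\mathbb{E}})$ such that $(\tilde M_t)_{t\ge0}\overset{d}{=}(M_t)_{t\ge0}$ and $(\tilde N_t)_{t\ge0}\overset{d}{=}(N_t)_{t\ge0}$.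
   Context: $C_{b.Lip}(\mathbb{R}^d)$ is the set of bounded Lipschitz functions on $\mathbb{R}^d$. A sublinear expectation space $(\Omega,\mathcal{H},\hat{\mathbb{E}})$: $\mathcal{H}$ is a linear space of real functions on $\Omega$ closed under $(X_1,\dots,X_d)\mapsto\varphi(X_1,\dots,X_d)$ for $\varphi\in C_{b.Lip}(\mathbb{R}^d)$, and $\hat{\mathbb{E}}:\mathcal{H}\to\mathbb{R}$ is monotone, constant preserving, subadditive and positively homogeneous. $Y$ ($d$-dim) is independent from $X$ ($m$-dim) under $\hat{\mathbb{E}}$ if $\hat{\mathbb{E}}[\varphi(X,Y)]=\hat{\mathbb{E}}[\hat{\mathbb{E}}[\varphi(x,Y)]_{x=X}]$ for all $\varphi\in C_{b.Lip}(\mathbb{R}^{m+d})$. A process $(X_t)_{t\in T}$ ($T=[0,\infty)$ or $[0,1]$) with $X_0=0$ has independent increments if for all $t_1<\dots<t_n$ in $T$, $X_{t_n}-X_{t_{n-1}}$ is independent from $(X_{t_1},\dots,X_{t_{n-1}})$. Random vectors (on possibly different spaces) are identically distributed ($\overset{d}{=}$) if their expectations of $\varphi(\cdot)$ agree for every $\varphi\in C_{b.Lip}$; processes are identically distributed if all finite-dimensional vectors $(X_{t_1},\dots,X_{t_n})$ are. *)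

(* Defs.v *)
From Stdlib Require Import Reals.
From mathcomp Require Import all_boot.
Set Implicit Arguments. Unset Strict Implicit. Unset Printing Implicit Defensive.

Local Open Scope R_scope.

(* Bounded Lipschitz functions on R^I (I a finite index type; R^d = 'I_d -> R).
   Lipschitz w.r.t. the max-norm (all norms on R^d are equivalent). *)
Definition cblip (I : finType) (phi : (I -> R) -> R) : Prop :=
  (exists B : R, forall x, Rabs (phi x) <= B) /\
  (exists L : R, forall (x y : I -> R) (delta : R),
      (forall i, Rabs (x i - y i) <= delta) -> Rabs (phi x - phi y) <= L * delta).

(* Sublinear expectation space (Omega, H, E). E is total but its axioms
   only concern elements of H. *)
Record SLE := {
  Omega : Type;
  Hsp : (Omega -> R) -> Prop;
  Ex : (Omega -> R) -> R;
  Hsp_add : forall X Y, Hsp X -> Hsp Y -> Hsp (fun w => X w + Y w);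
  Hsp_scal : forall (c : R) X, Hsp X -> Hsp (fun w => c * X w);
  Hsp_lip : forall (n : nat) (X : 'I_n -> Omega -> R) (phi : ('I_n -> R) -> R),
      (forall i, Hsp (X i)) -> cblip phi -> Hsp (fun w => phi (fun i => X i w));
  Ex_mono : forall X Y, Hsp X -> Hsp Y -> (forall w, X w <= Y w) -> Ex X <= Ex Y;
  Ex_const : forall c : R, Ex (fun _ => c) = c;
  Ex_subadd : forall X Y, Hsp X -> Hsp Y ->
      Ex (fun w => X w + Y w) <= Ex X + Ex Y;
  Ex_poshom : forall (l : R) X, Hsp X -> 0 <= l -> Ex (fun w => l * X w) = l * Ex X
}.

Arguments Omega : clear implicits.
Arguments Hsp : clear implicits.
Arguments Ex : clear implicits.

Definition vcat (I J : finType) (x : I -> R) (y : J -> R) : (I + J)%type -> R :=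
  fun k => match k with inl i => x i | inr j => y j end.

(* Y (J-dim) is independent from X (I-dim) under E *)
Definition indep (S : SLE) (I J : finType)
    (X : I -> Omega S -> R) (Y : J -> Omega S -> R) : Prop :=
  forall phi : ((I + J)%type -> R) -> R, cblip phi ->
    Ex S (fun w => phi (vcat (fun i => X i w) (fun j => Y j w))) =
    Ex S (fun w => (fun x : I -> R => Ex S (fun w' => phi (vcat x (fun j => Y j w'))))
                     (fun i => X i w)).

Definition ident_vec (S1 S2 : SLE) (I : finType)
    (X : I -> Omega S1 -> R) (Y : I -> Omega S2 -> R) : Prop :=
  forall phi : (I -> R) -> R, cblip phi ->
    Ex S1 (fun w => phi (fun i => X i w)) = Ex S2 (fun w => phi (fun i => Y i w)).

Definition Tpos (t : R) : Prop := 0 <= t.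
Definition Tunit (t : R) : Prop := 0 <= t <= 1.

(* a D-dimensional process indexed by the time set T (functions of t outside T are irrelevant) *)
Definition process (S : SLE) (D : finType) := R -> D -> Omega S -> R.

Definition is_process (T : R -> Prop) (S : SLE) (D : finType) (X : process S D) : Prop :=
  forall t, T t -> forall i, Hsp S (X t i).

Definition fdvec (S : SLE) (D : finType) (X : process S D) (n : nat) (t : 'I_n -> R)
  : ('I_n * D)%type -> Omega S -> R :=
  fun p w => X (t p.1) p.2 w.

Definition indep_incr (T : R -> Prop) (S : SLE) (D : finType) (X : process S D) : Prop :=
  is_process T X /\
  (forall i w, X 0 i w = 0) /\
  (forall (k : nat) (s : 'I_k.+1 -> R) (v : R),
     (forall i : 'I_k.+1, T (s i)) -> T v ->
     (forall i j : 'I_k.+1, (i < j)%N -> s i < s j) ->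
     s ord_max < v ->
     indep (fdvec X s) (fun i w => X v i w - X (s ord_max) i w)).

Definition ident_proc (T : R -> Prop) (S1 S2 : SLE) (D : finType)
    (X : process S1 D) (Y : process S2 D) : Prop :=
  forall (n : nat) (t : 'I_n -> R), (forall i, T (t i)) ->
    ident_vec (fdvec X t) (fdvec Y t).

Definition lpart (S : SLE) (d : nat) (Z : process S 'I_(d + d)) : process S 'I_d :=
  fun t i w => Z t (lshift d i) w.
Definition rpart (S : SLE) (d : nat) (Z : process S 'I_(d + d)) : process S 'I_d :=
  fun t i w => Z t (rshift d i) w.

Definition shift_incr (S : SLE) (D : finType) (M : process S D) (a : R) : process S D :=
  fun t i w => M (a + t) i w - M a i w.

(* Main.v *)
Require Import Defs.
From Stdlib Require Import Reals.
From mathcomp Require Import all_boot.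

From Stdlib Require Import Reals Lra Classical ClassicalEpsilon FunctionalExtensionality.
From mathcomp Require Import all_boot.
Set Implicit Arguments. Unset Strict Implicit. Unset Printing Implicit Defensive.
Local Open Scope R_scope.

Definition lipP (I : Type) (g : (I -> R) -> R) (L : R) :=
  forall x y delta, 0 <= delta -> (forall i, Rabs (x i - y i) <= delta) ->
    Rabs (g x - g y) <= L * delta.
Definition bnd (I : Type) (g : (I -> R) -> R) := exists B, forall x, Rabs (g x) <= B.

Lemma cblip_of (I : finType) (g : (I -> R) -> R) :
  bnd g -> (exists L, lipP g L) -> cblip g.
Proof.
move=> Hb [L HL]; split => //.
case: (classic (exists i : I, True)) => [[i0 _]|Hn].
- exists L => x y d Hd; apply: HL => //.
  by apply: Rle_trans (Hd i0); apply: Rabs_pos.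
- exists 0 => x y d Hd.
  have := HL x y 0 (Rle_refl 0).
  have H0 : forall i, Rabs (x i - y i) <= 0 by move=> i; case: Hn; exists i.
  by move=> /(_ H0); rewrite Rmult_0_r Rmult_0_l.
Qed.

Lemma cblip_bnd (I : finType) (g : (I -> R) -> R) : cblip g -> bnd g.
Proof. by case. Qed.

Lemma cblip_lip (I : finType) (g : (I -> R) -> R) : cblip g -> exists L, 0 <= L /\ lipP g L.
Proof.
case=> _ [L HL]; exists (Rmax L 0); split; first by apply: Rmax_r.
move=> x y d Hd Hxy; apply: Rle_trans (HL x y d Hxy) _.
apply: Rmult_le_compat_r => //; apply: Rmax_l.
Qed.

Lemma Rabs_le0 a : Rabs a <= 0 -> a = 0.
Proof. move=> H; have := Rle_abs a; have := Rle_abs (-a); rewrite Rabs_Ropp; lra. Qed.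

Lemma Rabs_le_elim a b : Rabs a <= b -> - b <= a <= b.
Proof. move=> H; have := Rle_abs a; have := Rle_abs (-a); rewrite Rabs_Ropp; lra. Qed.

Lemma Rabs_le_intro a b : - b <= a <= b -> Rabs a <= b.
Proof. move=> H; unfold Rabs; destruct (Rcase_abs a); lra. Qed.

Lemma lipP_ext (I : Type) (g : (I -> R) -> R) L x y :
  lipP g L -> (forall i, x i = y i) -> g x = g y.
Proof.
move=> HL Hxy; have := HL x y 0 (Rle_refl 0).
have H0 : forall i, Rabs (x i - y i) <= 0.
  by move=> i; rewrite Hxy Rminus_diag Rabs_R0; apply: Rle_refl.
move=> /(_ H0); rewrite Rmult_0_r => /Rabs_le0 ?; lra.
Qed.

Lemma cblip_ext (I : finType) (g : (I -> R) -> R) x y :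
  cblip g -> (forall i, x i = y i) -> g x = g y.
Proof. move=> /cblip_lip [L [_ HL]] H; exact: (lipP_ext HL H). Qed.

Lemma fin_ub (J : finType) (f : J -> R) : exists B, forall j, f j <= B.
Proof.
have : forall s : seq J, exists B, forall j, j \in s -> f j <= B.
  elim=> [|a s [B HB]]; first by exists 0.
  exists (Rmax (f a) B) => j; rewrite inE => /orP [/eqP ->|/HB H].
  - exact: Rmax_l.
  - apply: Rle_trans H _; exact: Rmax_r.
move=> /(_ (enum J)) [B HB]; exists B => j; apply: HB; by rewrite mem_enum.
Qed.

Lemma lipP_comp (I J : finType) (phi : (J -> R) -> R) (g : J -> (I -> R) -> R) Lp :
  lipP phi Lp -> 0 <= Lp -> (forall j, exists L, lipP (g j) L) ->
  exists L, lipP (fun x => phi (fun j => g j x)) L.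
Proof.
move=> Hp HLp Hg.
have [Ls HLs] := fin_all_exists Hg.
have [B HB] := fin_ub (fun j => Rmax (Ls j) 0).
exists (Lp * Rmax B 0) => x y d Hd Hxy.
have HB0 : 0 <= Rmax B 0 by apply: Rmax_r.
rewrite Rmult_assoc; apply: Hp; first by apply: Rmult_le_pos.
move=> j; apply: Rle_trans (HLs j x y d Hd Hxy) _.
apply: Rmult_le_compat_r => //.
have := HB j; have := Rmax_l (Ls j) 0; have := Rmax_l B 0; simpl; lra.
Qed.

From Stdlib Require Import Reals Lra Classical ClassicalEpsilon FunctionalExtensionality.
From mathcomp Require Import all_boot.
Set Implicit Arguments. Unset Strict Implicit. Unset Printing Implicit Defensive.
Local Open Scope R_scope.

Section SLEfacts.
Variable S : SLE.

Lemma Hsp_ext (X Y : Omega S -> R) : Hsp S X -> (forall w, X w = Y w) -> Hsp S Y.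
Proof. by move=> H E; have <- : X = Y by apply: functional_extensionality. Qed.

Lemma Ex_ext (X Y : Omega S -> R) : (forall w, X w = Y w) -> Ex S X = Ex S Y.
Proof. by move=> E; have -> : X = Y by apply: functional_extensionality. Qed.

Lemma cblip_const (I : finType) (c : R) : cblip (fun _ : I -> R => c).
Proof.
apply: cblip_of; first by exists (Rabs c) => _; apply: Rle_refl.
exists 0 => x y d _ _; rewrite Rminus_diag Rabs_R0 Rmult_0_l; apply: Rle_refl.
Qed.

Lemma Hsp_const (c : R) : Hsp S (fun _ => c).
Proof.
have := @Hsp_lip S 0 (fun _ _ => 0) (fun _ => c) (fun i => match i with Ordinal _ H => False_ind _ (notF H) end).
by apply; apply: cblip_const.
Qed.

Lemma Hsp_lipI (I : finType) (Z : I -> Omega S -> R) (phi : (I -> R) -> R) :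
  (forall p, Hsp S (Z p)) -> cblip phi -> Hsp S (fun w => phi (fun p => Z p w)).
Proof.
move=> HZ Hphi.
have := @Hsp_lip S #|I| (fun i => Z (enum_val i)) (fun y => phi (fun p => y (enum_rank p))).
move=> H; apply: Hsp_ext; first apply: H.
- by move=> i; apply: HZ.
- case: (cblip_lip Hphi) => L [HL0 HL]; apply: cblip_of.
  + case: Hphi => [[B HB] _]; by exists B.
  + exists L => x y d Hd Hxy; apply: HL => // p; apply: Hxy.
- move=> w /=; apply: cblip_ext => // p; by rewrite enum_rankK.
Qed.

Lemma Hsp_opp X : Hsp S X -> Hsp S (fun w => - X w).
Proof. move=> H; apply: Hsp_ext (Hsp_scal (-1) H) _ => w; ring. Qed.

Lemma Hsp_sub X Y : Hsp S X -> Hsp S Y -> Hsp S (fun w => X w - Y w).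
Proof. move=> HX HY; apply: Hsp_add => //; exact: Hsp_opp. Qed.

Lemma Ex_le_sub X Y : Hsp S X -> Hsp S Y -> Ex S X - Ex S Y <= Ex S (fun w => X w - Y w).
Proof.
move=> HX HY.
have E : Ex S X = Ex S (fun w => Y w + (X w - Y w)) by apply: Ex_ext => w; ring.
have := Ex_subadd HY (Hsp_sub HX HY); lra.
Qed.

Lemma Ex_le_const X c : Hsp S X -> (forall w, X w <= c) -> Ex S X <= c.
Proof. move=> HX H; rewrite -(Ex_const S c); apply: Ex_mono => //; exact: Hsp_const. Qed.

Lemma Ex_ge_const X c : Hsp S X -> (forall w, c <= X w) -> c <= Ex S X.
Proof. move=> HX H; rewrite -(Ex_const S c); apply: Ex_mono => //; exact: Hsp_const. Qed.

Lemma Ex_lip X Y c : Hsp S X -> Hsp S Y -> (forall w, Rabs (X w - Y w) <= c) ->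
  Rabs (Ex S X - Ex S Y) <= c.
Proof.
move=> HX HY H; apply: Rabs_le_intro.
have h1 := Ex_le_sub HX HY; have h2 := Ex_le_sub HY HX.
have h3 : Ex S (fun w => X w - Y w) <= c.
  apply: Ex_le_const; first exact: Hsp_sub.
  by move=> w; have := Rabs_le_elim (H w); lra.
have h4 : Ex S (fun w => Y w - X w) <= c.
  apply: Ex_le_const; first exact: Hsp_sub.
  by move=> w; have := Rabs_le_elim (H w); lra.
lra.
Qed.

Lemma Ex_param (I : finType) (F : (I -> R) -> Omega S -> R) :
  (forall a, Hsp S (F a)) -> (exists B, forall a w, Rabs (F a w) <= B) ->
  (exists L, forall a a' d, 0 <= d -> (forall i, Rabs (a i - a' i) <= d) ->
      forall w, Rabs (F a w - F a' w) <= L * d) ->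
  cblip (fun a => Ex S (F a)).
Proof.
move=> HF [B HB] [L HL]; apply: cblip_of.
- exists B => a; apply: Rabs_le_intro; split.
  + apply: Ex_ge_const => // w; have := Rabs_le_elim (HB a w); lra.
  + apply: Ex_le_const => // w; have := Rabs_le_elim (HB a w); lra.
- exists L => a a' d Hd Had; apply: Ex_lip => //; exact: HL.
Qed.

End SLEfacts.

From Stdlib Require Import Reals Lra Classical ClassicalEpsilon FunctionalExtensionality Eqdep_dec.
From mathcomp Require Import all_boot.
Set Implicit Arguments. Unset Strict Implicit. Unset Printing Implicit Defensive.
Local Open Scope R_scope.

Fixpoint sumR (f : nat -> R) (n : nat) : R :=
  match n with O => 0 | S n => sumR f n + f n end.

Lemma sumR_ext f g n : (forall j, (j < n)%N -> f j = g j) -> sumR f n = sumR g n.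
Proof.
elim: n => [|n IH] H //=; rewrite IH ?H //; move=> j Hj; apply: H; exact: ltnW.
Qed.

Lemma sumR_add f g n : sumR (fun j => f j + g j) n = sumR f n + sumR g n.
Proof. elim: n => [|n IH] /=; [ring | rewrite IH; ring]. Qed.

Lemma sumR_scal c f n : sumR (fun j => c * f j) n = c * sumR f n.
Proof. elim: n => [|n IH] /=; [ring | rewrite IH; ring]. Qed.

Lemma sumR_zero f n : (forall j, (j < n)%N -> f j = 0) -> sumR f n = 0.
Proof. move=> H; rewrite (sumR_ext (g := fun _ => 0)) //; elim: n {H} => //= n ->; ring. Qed.

Lemma sumR_split f m n : sumR f (m + n) = sumR f m + sumR (fun j => f (m + j)%N) n.
Proof. elim: n => [|n IH] /=; rewrite ?addn0 /=; [ring|]. rewrite addnS /= IH; ring. Qed.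

Lemma sumR_delta (j : nat) a (g : nat -> R) n :
  sumR (fun k => if k == j then a else g k) n =
  sumR (fun k => if k == j then 0 else g k) n + (if (j < n)%N then a else 0).
Proof.
elim: n => [|n IH] /=; first ring.
rewrite IH; case: (eqVneq n j) => [->|Hn].
- rewrite ltnn ltnSn; ring.
- have -> : (j < n.+1)%N = (j < n)%N by rewrite ltnS leq_eqVlt eq_sym (negbTE Hn).
  ring.
Qed.

Lemma sumR_lip f g n d : (forall j, (j < n)%N -> Rabs (f j - g j) <= d) ->
  Rabs (sumR f n - sumR g n) <= INR n * d.
Proof.
elim: n => [|n IH] H; first by rewrite /= Rminus_diag Rabs_R0 Rmult_0_l; apply: Rle_refl.
rewrite S_INR /=.
have h1 := IH (fun j Hj => H j (ltnW Hj)).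
have h2 := H n (ltnSn n).
have -> : sumR f n + f n - (sumR g n + g n) = sumR f n - sumR g n + (f n - g n) by ring.
apply: Rle_trans (Rabs_triang (sumR f n - sumR g n) (f n - g n)) _.
lra.
Qed.

Section Prod.
Variable Sb : nat -> SLE.
Definition Om := forall i, Omega (Sb i).

Definition upd (om : Om) (j : nat) (w : Omega (Sb j)) : Om :=
  fun i => match Nat.eq_dec j i with
           | left e => eq_rect j (fun k => Omega (Sb k)) w i e
           | right _ => om i end.
Arguments upd om j w i : clear implicits.

Lemma upd_eq om j w : upd om j w j = w.
Proof.
rewrite /upd; case: (Nat.eq_dec j j) => [e|//].
by rewrite (UIP_refl_nat _ e).
Qed.

Lemma upd_neq om j w i : j <> i -> upd om j w i = om i.
Proof. by rewrite /upd; case: (Nat.eq_dec j i). Qed.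

Lemma upd_base om om' j w i : j = i -> upd om j w i = upd om' j w i.
Proof. by rewrite /upd; case: (Nat.eq_dec j i). Qed.

Definition T (j : nat) (X : Om -> R) : Om -> R :=
  fun om => Ex (Sb j) (fun w => X (upd om j w)).

Fixpoint ItrR (a n : nat) (X : Om -> R) : Om -> R :=
  match n with O => X | S n => T a (ItrR a.+1 n X) end.

Definition depC (C : nat -> Prop) (X : Om -> R) :=
  forall om om', (forall i, C i -> om i = om' i) -> X om = X om'.

Lemma T_dep C j X : depC C X -> depC (fun i => C i /\ i <> j) (T j X).
Proof.
move=> H om om' E; rewrite /T; apply: Ex_ext => w; apply: H => i Ci.
case: (Nat.eq_dec j i) => [e|ne].
- by rewrite (upd_base om om' w e).
- rewrite !upd_neq //; apply: E; split => //; by move=> e; apply: ne.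
Qed.

Lemma T_nodep j X : depC (fun i => i <> j) X -> forall om, T j X om = X om.
Proof.
move=> H om; rewrite /T.
rewrite (Ex_ext (Y := fun _ => X om)); first by rewrite Ex_const.
move=> w; apply: H => i Hi; apply: upd_neq; by move=> e; apply: Hi.
Qed.

Lemma ItrR_ext a n X Y : (forall om, X om = Y om) -> forall om, ItrR a n X om = ItrR a n Y om.
Proof.
move=> H; have -> : X = Y by apply: functional_extensionality. by [].
Qed.

Lemma ItrR_split a n m X : ItrR a (n + m) X = ItrR a n (ItrR (a + n) m X).
Proof.
elim: n a => [|n IH] a /=; first by rewrite addn0.
by rewrite IH addSnnS.
Qed.

Lemma ItrR_dep C a n X : depC C X ->
  depC (fun i => C i /\ ~ ((a <= i)%N /\ (i < a + n)%N)) (ItrR a n X).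
Proof.
elim: n a C X => [|n IH] a C X H /=.
- move=> om om' E; apply: H => i Ci; apply: E; split => //; rewrite addn0; case=> h1 h2.
  by move: (leq_trans h2 h1); rewrite ltnn.
- have H1 := IH a.+1 C X H.
  have H2 := T_dep (j:=a) H1.
  move=> om om' E; apply: H2 => i [[Ci Hi] Hia]; apply: E; split => //.
  case=> h1 h2; apply: Hi; split.
  + rewrite ltn_neqAle h1 andbT; apply/eqP => e; apply: Hia; by rewrite e.
  + by rewrite addSnnS.
Qed.

Lemma ItrR_nodep a n X : depC (fun i => ~ ((a <= i)%N /\ (i < a + n)%N)) X ->
  forall om, ItrR a n X om = X om.
Proof.
elim: n a X => [|n IH] a X H om //=.
have -> : ItrR a.+1 n X = X.
  apply: functional_extensionality => om'.
  apply: IH => om1 om2 E; apply: H => i Hi; apply: E; move=> [h1 h2].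
  apply: Hi; split; [exact: ltnW | by rewrite -addSnnS].
apply: T_nodep => om1 om2 E; apply: H => i Hi; apply: E => e; apply: Hi; subst i.
by rewrite leqnn addnS ltnS leq_addr.
Qed.


Lemma ItrR_freeze (A : Type) a n (f : A -> Om -> R) (g : Om -> A) :
  (forall om j w, (a <= j)%N -> (j < a + n)%N -> g (upd om j w) = g om) ->
  forall om0, ItrR a n (fun om => f (g om) om) om0 = ItrR a n (f (g om0)) om0.
Proof.
elim: n a => [|n IH] a Hg om0 //=.
rewrite /T; apply: Ex_ext => w.
rewrite IH; last first.
  move=> om j w' h1 h2; apply: Hg; [exact: ltnW | by rewrite -addSnnS].
rewrite Hg //; by rewrite addnS ltnS leq_addr.
Qed.

Lemma ItrR_const_pt a n X : depC (fun i => (a <= i)%N /\ (i < a + n)%N) X ->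
  forall om om', ItrR a n X om = ItrR a n X om'.
Proof.
move=> H om om'; apply: (ItrR_dep H) => i [[h1 h2] h3]; by case: h3.
Qed.

Lemma ItrR_const a n (c : R) om : ItrR a n (fun _ => c) om = c.
Proof. by rewrite ItrR_nodep. Qed.
End Prod.
Arguments upd {Sb} om j w i.
Arguments T {Sb} j X om.
Arguments ItrR {Sb} a n X om.
Arguments depC {Sb} C X.

From Stdlib Require Import Reals Lra Classical ClassicalEpsilon FunctionalExtensionality Eqdep_dec.
From mathcomp Require Import all_boot.
Set Implicit Arguments. Unset Strict Implicit. Unset Printing Implicit Defensive.
Local Open Scope R_scope.

Lemma cblip_add (I : finType) (g h : (I -> R) -> R) :
  cblip g -> cblip h -> cblip (fun x => g x + h x).
Proof.
move=> Hg Hh; case: (Hg) => [[Bg HBg] _]; case: (Hh) => [[Bh HBh] _].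
case: (cblip_lip Hg) => Lg [HLg0 HLg]; case: (cblip_lip Hh) => Lh [HLh0 HLh].
apply: cblip_of.
- exists (Bg + Bh) => x; apply: Rle_trans (Rabs_triang _ _) _; have := HBg x; have := HBh x; lra.
- exists (Lg + Lh) => x y d Hd Hxy.
  have -> : g x + h x - (g y + h y) = (g x - g y) + (h x - h y) by ring.
  apply: Rle_trans (Rabs_triang _ _) _.
  have := HLg x y d Hd Hxy; have := HLh x y d Hd Hxy; nra.
Qed.

Lemma cblip_scal (I : finType) (c : R) (g : (I -> R) -> R) :
  cblip g -> cblip (fun x => c * g x).
Proof.
move=> Hg; case: (Hg) => [[Bg HBg] _]; case: (cblip_lip Hg) => Lg [HLg0 HLg].
apply: cblip_of.
- exists (Rabs c * Bg) => x; rewrite Rabs_mult; apply: Rmult_le_compat_l => //; exact: Rabs_pos.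
- exists (Rabs c * Lg) => x y d Hd Hxy.
  have -> : c * g x - c * g y = c * (g x - g y) by ring.
  rewrite Rabs_mult Rmult_assoc; apply: Rmult_le_compat_l; [exact: Rabs_pos | exact: HLg].
Qed.

Lemma cblip_pre (I J : finType) (m : I -> J) (g : (J -> R) -> R) :
  cblip g -> cblip (fun x : J -> R => g x) -> cblip (fun x : I -> R => 0) -> True.
Proof. by []. Qed.

Lemma cblip_precomp (I J : finType) (m : J -> I) (g : (J -> R) -> R) :
  cblip g -> cblip (fun x : I -> R => g (fun j => x (m j))).
Proof.
move=> Hg; case: (Hg) => [[Bg HBg] _]; case: (cblip_lip Hg) => Lg [HLg0 HLg].
apply: cblip_of; first by exists Bg.
exists Lg => x y d Hd Hxy; apply: HLg => // j; exact: Hxy.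
Qed.

Lemma Ex_transl (S : SLE) (c : R) X : Hsp S X -> Ex S (fun w => c + X w) = c + Ex S X.
Proof.
move=> HX; apply: Rle_antisym.
- have := Ex_subadd (Hsp_const S c) HX; rewrite Ex_const; lra.
- have E : Ex S X = Ex S (fun w => (c + X w) + (- c)) by apply: Ex_ext => w /=; ring.
  have H1 : Hsp S (fun w => c + X w) by apply: Hsp_add => //; exact: Hsp_const.
  have := Ex_subadd H1 (Hsp_const S (-c)); rewrite Ex_const -E; lra.
Qed.

Lemma sumR_trunc (f : nat -> R) m n : (m <= n)%N ->
  sumR (fun k => if (k < m)%N then f k else 0) n = sumR f m.
Proof.
move=> Hmn; rewrite -(subnKC Hmn) sumR_split.
rewrite (@sumR_ext (fun k => if (k < m)%N then f k else 0) f m); last by move=> j ->.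
rewrite (@sumR_zero (fun j => if (m + j < m)%N then f (m + j)%N else 0)); first ring.
by move=> j _; rewrite ltnNge leq_addr.
Qed.

Section Rep.
Local Unset Implicit Arguments.
Variable Sb : nat -> SLE.
Variable b : Om Sb.

Record RepD := { rK : nat; rz : forall j, Omega (Sb j) -> R; rI : finType; rc : rI -> nat;
  rxi : forall p, Omega (Sb (rc p)) -> R; rB : (rI -> R) -> R }.
Arguments rz r j _ : clear implicits.
Arguments rxi r p _ : clear implicits.
Arguments rc r p : clear implicits.
Arguments rB r _ : clear implicits.

Definition goodrep (r : RepD) :=
  (forall j, Hsp (Sb j) (rz r j)) /\ (forall p, Hsp (Sb (rc r p)) (rxi r p)) /\ cblip (rB r).
Definition vecof (r : RepD) (om : Om Sb) : rI r -> R := fun p => rxi r p (om (rc r p)).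
Definition evalrep (r : RepD) (om : Om Sb) :=
  sumR (fun j => rz r j (om j)) (rK r) + rB r (vecof r om).
Definition isrep (X : Om Sb -> R) := exists r, goodrep r /\ forall om, X om = evalrep r om.

Lemma rep_ext X Y : isrep X -> (forall om, X om = Y om) -> isrep Y.
Proof. by move=> [r [Hr E]] H; exists r; split => // om; rewrite -H. Qed.

Lemma Hsp_upd j k (f : Omega (Sb k) -> R) : j = k -> Hsp (Sb k) f ->
  Hsp (Sb j) (fun w => f (upd b j w k)).
Proof. move=> e; subst k => H; apply: Hsp_ext H _ => w; by rewrite upd_eq. Qed.

Lemma rep_coord j (f : Omega (Sb j) -> R) : Hsp (Sb j) f -> isrep (fun om => f (om j)).
Proof.
move=> Hf.
exists {| rK := j.+1; rz := fun k w => if k == j then f (upd b k w j) else 0;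
          rI := void; rc := fun p => match p with end;
          rxi := fun p => match p with end; rB := fun _ => 0 |}.
split.
- split; [|split].
  + move=> k /=; case: (eqVneq k j) => [e|_]; last exact: Hsp_const.
    by apply: Hsp_upd.
  + by case.
  + exact: cblip_const.
- move=> om; rewrite /evalrep /=.
  rewrite (sumR_ext (g := fun k => if k == j then f (om j) else 0)); last first.
    by move=> k _; case: (eqVneq k j) => [->|//]; rewrite upd_eq.
  rewrite sumR_delta sumR_zero ?ltnSn; last by move=> k _; case: (k == j).
  rewrite /= ?ltnn ?eqxx ?upd_eq; ring.
Qed.

Lemma rep_add X Y : isrep X -> isrep Y -> isrep (fun om => X om + Y om).
Proof.
move=> [r1 [[Hz1 [Hx1 HB1]] E1]] [r2 [[Hz2 [Hx2 HB2]] E2]].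
pose c := fun p : (rI r1 + rI r2)%type => match p with inl p => rc r1 p | inr p => rc r2 p end.
exists {| rK := rK r1 + rK r2;
          rz := fun k w => (if (k < rK r1)%N then rz r1 k w else 0) + (if (k < rK r2)%N then rz r2 k w else 0);
          rI := (rI r1 + rI r2)%type; rc := c;
          rxi := fun p => match p as p0 return Omega (Sb (c p0)) -> R with
                          | inl p => rxi r1 p | inr p => rxi r2 p end;
          rB := fun x => rB r1 (fun p => x (inl p)) + rB r2 (fun p => x (inr p)) |}.
split.
- split; [|split].
  + move=> k /=; apply: Hsp_add; [case: (k < rK r1)%N|case: (k < rK r2)%N] => //; exact: Hsp_const.
  + by case.
  + apply: cblip_add; exact: cblip_precomp.
- move=> om; rewrite E1 E2 /evalrep /= sumR_add.
  rewrite (sumR_trunc (fun j => rz r1 j (om j))) ?leq_addr //.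
  rewrite (sumR_trunc (fun j => rz r2 j (om j))) ?leq_addl //.
  rewrite /vecof /=; ring.
Qed.

Lemma rep_scal (l : R) X : isrep X -> isrep (fun om => l * X om).
Proof.
move=> [r [[Hz [Hx HB]] E]].
exists {| rK := rK r; rz := fun k w => l * rz r k w; rI := rI r; rc := rc r;
          rxi := rxi r; rB := fun x => l * rB r x |}.
split.
- split; [|split] => //=; first by move=> k; apply: Hsp_scal.
  exact: cblip_scal.
- move=> om; rewrite E /evalrep /= sumR_scal /vecof /=; ring.
Qed.


Lemma rep_lip n (X : 'I_n -> Om Sb -> R) (Phi : ('I_n -> R) -> R) :
  (forall i, isrep (X i)) -> cblip Phi -> isrep (fun om => Phi (fun i => X i om)).
Proof.
move=> HX HPhi.
have [r Hr] := fin_all_exists HX.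
pose I := {i : 'I_n & (rI (r i) + 'I_(rK (r i)))%type}.
pose c := fun q : I => match q with
                       | existT i (inl p) => rc (r i) p
                       | existT i (inr o) => nat_of_ord o end.
pose xi := fun q : I => match q as q0 return Omega (Sb (c q0)) -> R with
                       | existT i (inl p) => rxi (r i) p
                       | existT i (inr o) => rz (r i) o end.
pose g := fun (i : 'I_n) (x : I -> R) =>
   sumR (fun k => oapp (fun o : 'I_(rK (r i)) => x (existT _ i (inr o))) 0 (insub k)) (rK (r i))
   + rB (r i) (fun p => x (existT _ i (inl p))).
exists {| rK := 0; rz := fun _ _ => 0; rI := I; rc := c; rxi := xi;
          rB := fun x => Phi (fun i => g i x) |}.
split.
- split; [|split].
  + move=> k /=; exact: Hsp_const.
  + move=> [i [p|o]] /=; case: (Hr i) => [[Hz [Hx HB]] _]; [exact: Hx | exact: Hz].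
  + apply: cblip_of.
    * case: HPhi => [[B HB] _]; by exists B => x; apply: HB.
    * case: (cblip_lip HPhi) => Lp [HLp0 HLp]; apply: (lipP_comp HLp HLp0) => i.
      case: (Hr i) => [[Hz [Hx HB]] _].
      case: (cblip_lip HB) => Lb [HLb0 HLb].
      exists (INR (rK (r i)) + Lb) => x y d Hd Hxy; rewrite /g.
      set s1 := sumR _ _; set s2 := sumR _ _.
      have h1 : Rabs (s1 - s2) <= INR (rK (r i)) * d.
        apply: sumR_lip => k _; case: insubP => [o _ _|_] /=; first exact: Hxy.
        by rewrite Rminus_diag Rabs_R0.
      have h2 : Rabs (rB (r i) (fun p => x (existT _ i (inl p))) - rB (r i) (fun p => y (existT _ i (inl p)))) <= Lb * d.
        by apply: HLb => // p; apply: Hxy.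
      set b1 := rB _ _ in h2 *; set b2 := rB _ _ in h2 *.
      have -> : s1 + b1 - (s2 + b2) = (s1 - s2) + (b1 - b2) by ring.
      apply: Rle_trans (Rabs_triang _ _) _; lra.
- move=> om; rewrite /evalrep /= Rplus_0_l /vecof /=.
  apply: cblip_ext => // i; rewrite (proj2 (Hr i)) /evalrep /g /vecof /=; congr (_ + _).
  apply: sumR_ext => k Hk; case: insubP => [o _ Eo|]; last by rewrite Hk.
  by rewrite /= -Eo.
Qed.

Definition depK K (X : Om Sb -> R) := depC (fun i => (i < K)%N) X.

Lemma depC_mono (C C' : nat -> Prop) (X : Om Sb -> R) : depC C X -> (forall i, C i -> C' i) -> depC C' X.
Proof. move=> H HC om om' E; apply: H => i Ci; apply: E; exact: HC. Qed.

Lemma rep_dep X : isrep X -> exists K, depK K X.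
Proof.
move=> [r [[Hz [Hx HB]] E]].
exists (maxn (rK r) (\max_(p : rI r) (rc r p)).+1) => om om' Eo.
rewrite !E /evalrep; congr (_ + _).
- apply: sumR_ext => k Hk; rewrite Eo //; apply: leq_trans Hk _; exact: leq_maxl.
- apply: cblip_ext => // p; rewrite /vecof Eo //.
  apply: leq_trans (leq_maxr _ _); rewrite ltnS; exact: leq_bigmax.
Qed.

Definition mixv (r : RepD) (j : nat) (x : rI r -> R) (w : Omega (Sb j)) : rI r -> R :=
  fun p => if rc r p == j then rxi r p (upd b j w (rc r p)) else x p.
Definition zdel (r : RepD) (j : nat) : forall k, Omega (Sb k) -> R :=
  fun k => if k == j then (fun _ => 0) else rz r k.

Lemma eval_slice r j om w : goodrep r ->
  evalrep r (upd om j w) =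
  sumR (fun k => zdel r j k (om k)) (rK r) +
  ((if (j < rK r)%N then rz r j w else 0) + rB r (mixv r j (vecof r om) w)).
Proof.
move=> [Hz [Hx HB]].
rewrite /evalrep.
rewrite (@sumR_ext (fun k => rz r k (upd om j w k)) (fun k => if k == j then rz r j w else zdel r j k (om k))); last first.
  move=> k _; rewrite /zdel; case: (eqVneq k j) => [->|ne]; first by rewrite upd_eq.
  rewrite upd_neq //; move=> e; move: ne; by rewrite e eqxx.
rewrite sumR_delta.
rewrite (@sumR_ext (fun k => if k == j then 0 else zdel r j k (om k)) (fun k => zdel r j k (om k))); last first.
  by move=> k _; rewrite /zdel; case: (k == j).
rewrite Rplus_assoc; congr (_ + (_ + _)).
apply: cblip_ext => // p; rewrite /mixv /vecof.
case: (eqVneq (rc r p) j) => [e|ne].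
- by rewrite (upd_base om b w (esym e)).
- rewrite upd_neq // => e; move: ne; by rewrite e eqxx.
Qed.

Lemma Hsp_mixB r j x : goodrep r -> Hsp (Sb j) (fun w => rB r (mixv r j x w)).
Proof.
move=> [Hz [Hx HB]]; apply: (Hsp_lipI (Z := fun p w => mixv r j x w p)) => // p.
rewrite /mixv; case: (eqVneq (rc r p) j) => [e|ne].
- by apply: Hsp_upd.
- exact: Hsp_const.
Qed.

Lemma Hsp_Yj r j : goodrep r -> Hsp (Sb j) (fun w => if (j < rK r)%N then rz r j w else 0).
Proof. move=> [Hz _]; case: (j < rK r)%N => //; exact: Hsp_const. Qed.

Lemma rep_slice X j om : isrep X -> Hsp (Sb j) (fun w => X (upd om j w)).
Proof.
move=> [r [Hr E]]; apply: (Hsp_ext (X := fun w => sumR (fun k => zdel r j k (om k)) (rK r) +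
  ((if (j < rK r)%N then rz r j w else 0) + rB r (mixv r j (vecof r om) w)))).
- apply: Hsp_add; first exact: Hsp_const.
  apply: Hsp_add; [exact: Hsp_Yj | exact: Hsp_mixB].
- by move=> w; rewrite E eval_slice.
Qed.

Definition Bint (r : RepD) (j : nat) (x : rI r -> R) :=
  Ex (Sb j) (fun w => (if (j < rK r)%N then rz r j w else 0) + rB r (mixv r j x w)).

Lemma Bint_cblip r j : goodrep r -> cblip (Bint r j).
Proof.
move=> Hr; case: (Hr) => [Hz [Hx HB]].
case: (HB) => [[MB HMB] _]; case: (cblip_lip HB) => L [HL0 HL].
have HY := Hsp_Yj r j Hr.
apply: cblip_of.
- exists (Rabs (Ex (Sb j) (fun w => if (j < rK r)%N then rz r j w else 0)) + MB) => x.
  have := @Ex_lip (Sb j) _ _ MB (Hsp_add HY (Hsp_mixB r j x Hr)) HY.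
  have H : forall w, Rabs ((if (j < rK r)%N then rz r j w else 0) + rB r (mixv r j x w) -
                         (if (j < rK r)%N then rz r j w else 0)) <= MB.
    move=> w; rewrite /Rminus Rplus_comm -Rplus_assoc Rplus_opp_l Rplus_0_l; exact: HMB.
  move=> /(_ H) H1; rewrite /Bint.
  set e1 := Ex _ _ in H1 *; set e2 := Ex _ _ in H1 *.
  have := Rabs_le_elim H1; have := Rle_abs e2; have := Rle_abs (- e2); rewrite Rabs_Ropp => ? ? ?.
  apply: Rabs_le_intro; lra.
- exists L => x y d Hd Hxy; apply: Ex_lip; try (apply: Hsp_add; [exact: HY| exact: Hsp_mixB]).
  move=> w.
  have -> : forall a u v : R, a + u - (a + v) = u - v by move=> *; ring.
  apply: HL => // p; rewrite /mixv; case: (rc r p == j) => //.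
  by rewrite Rminus_diag Rabs_R0.
Qed.

Lemma rep_T X j : isrep X -> isrep (T j X).
Proof.
move=> [r [Hr E]].
exists {| rK := rK r; rz := zdel r j; rI := rI r; rc := rc r; rxi := rxi r; rB := Bint r j |}.
split.
- case: (Hr) => [Hz [Hx HB]]; split; [|split] => //=.
  + by move=> k; rewrite /zdel; case: (k == j) => //; exact: Hsp_const.
  + exact: Bint_cblip.
- move=> om; rewrite /T /evalrep /=.
  rewrite (Ex_ext (Y := fun w => sumR (fun k => zdel r j k (om k)) (rK r) +
    ((if (j < rK r)%N then rz r j w else 0) + rB r (mixv r j (vecof r om) w)))); last first.
    by move=> w; rewrite E eval_slice.
  rewrite Ex_transl //; apply: Hsp_add; [exact: Hsp_Yj | exact: Hsp_mixB].
Qed.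

Lemma rep_ItrR a n X : isrep X -> isrep (ItrR a n X).
Proof. elim: n a X => [|n IH] a X H //=; apply: rep_T; exact: IH. Qed.

Lemma T_mono j X Y : isrep X -> isrep Y -> (forall om, X om <= Y om) -> forall om, T j X om <= T j Y om.
Proof. move=> HX HY H om; apply: Ex_mono; try exact: rep_slice. move=> w; exact: H. Qed.

Lemma T_add j X Y : isrep X -> isrep Y -> forall om, T j (fun om => X om + Y om) om <= T j X om + T j Y om.
Proof. move=> HX HY om; rewrite /T; apply: Ex_subadd; exact: rep_slice. Qed.

Lemma T_scal j l X : isrep X -> 0 <= l -> forall om, T j (fun om => l * X om) om = l * T j X om.
Proof. move=> HX Hl om; rewrite /T; apply: Ex_poshom => //; exact: rep_slice. Qed.

Lemma ItrR_mono a n X Y : isrep X -> isrep Y -> (forall om, X om <= Y om) ->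
  forall om, ItrR a n X om <= ItrR a n Y om.
Proof.
elim: n a X Y => [|n IH] a X Y HX HY H om //=.
apply: T_mono; try exact: rep_ItrR; exact: IH.
Qed.

Lemma ItrR_add a n X Y : isrep X -> isrep Y ->
  forall om, ItrR a n (fun om => X om + Y om) om <= ItrR a n X om + ItrR a n Y om.
Proof.
elim: n a => [|n IH] a HX HY om /=; first by apply: Rle_refl.
apply: Rle_trans (T_add a _ _ (rep_ItrR a.+1 n X HX) (rep_ItrR a.+1 n Y HY) om).
apply: T_mono; [apply: rep_ItrR; exact: rep_add | apply: rep_add; exact: rep_ItrR | move=> om'; exact: IH].
Qed.

Lemma ItrR_scal a n l X : isrep X -> 0 <= l ->
  forall om, ItrR a n (fun om => l * X om) om = l * ItrR a n X om.
Proof.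
elim: n a => [|n IH] a HX Hl om //=.
have -> : ItrR a.+1 n (fun om => l * X om) = (fun om => l * ItrR a.+1 n X om).
  by apply: functional_extensionality => om'; apply: IH.
apply: T_scal => //; exact: rep_ItrR.
Qed.


Definition Kof (X : Om Sb -> R) : nat :=
  match excluded_middle_informative (exists K, depK K X) with
  | left H => proj1_sig (constructive_indefinite_description _ H)
  | right _ => 0%N end.
Definition ExP (X : Om Sb -> R) := ItrR 0 (Kof X) X b.

Lemma depK_stable K m X : depK K X -> (K <= m)%N -> forall om, ItrR 0 m X om = ItrR 0 K X om.
Proof.
move=> H Hm om; rewrite -(subnKC Hm) ItrR_split add0n.
have -> : ItrR K (m - K) X = X; last by [].
apply: functional_extensionality => om'; apply: ItrR_nodep.
apply: (depC_mono _ _ _ H) => i Hi [h1 _]; by move: (leq_trans Hi h1); rewrite ltnn.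
Qed.

Lemma ExP_eq K X : depK K X -> ExP X = ItrR 0 K X b.
Proof.
move=> H; rewrite /ExP /Kof.
case: excluded_middle_informative => [H'|[]]; last by exists K.
case: (constructive_indefinite_description _ H') => K' HK' /=.
rewrite -(depK_stable K' (maxn K' K) X HK' (leq_maxl K' K)) (depK_stable K (maxn K' K) X H (leq_maxr K' K)) //.
Qed.

Lemma depK_max K1 K2 X : depK K1 X -> depK (maxn K1 K2) X.
Proof. move=> H; apply: (depC_mono _ _ _ H) => i Hi; apply: leq_trans Hi (leq_maxl _ _). Qed.

Lemma ExP_mono X Y : isrep X -> isrep Y -> (forall om, X om <= Y om) -> ExP X <= ExP Y.
Proof.
move=> HX HY H; case: (rep_dep X HX) => K1 H1; case: (rep_dep Y HY) => K2 H2.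
rewrite (ExP_eq _ _ (depK_max K1 K2 X H1)) (ExP_eq (maxn K1 K2) Y (depC_mono _ _ _ H2 _)).
- exact: ItrR_mono.
- move=> i Hi; apply: leq_trans Hi (leq_maxr _ _).
Qed.

Lemma ExP_const c : ExP (fun _ => c) = c.
Proof. by rewrite (ExP_eq 0). Qed.

Lemma ExP_subadd X Y : isrep X -> isrep Y -> ExP (fun om => X om + Y om) <= ExP X + ExP Y.
Proof.
move=> HX HY; case: (rep_dep X HX) => K1 H1; case: (rep_dep Y HY) => K2 H2.
have H1' := depK_max K1 K2 X H1.
have H2' : depK (maxn K1 K2) Y by apply: (depC_mono _ _ _ H2) => i Hi; apply: leq_trans Hi (leq_maxr _ _).
have H3 : depK (maxn K1 K2) (fun om => X om + Y om).
  by move=> om om' E; rewrite (H1' om om' E) (H2' om om' E).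
rewrite (ExP_eq _ _ H1') (ExP_eq _ _ H2') (ExP_eq _ _ H3); exact: ItrR_add.
Qed.

Lemma ExP_poshom l X : isrep X -> 0 <= l -> ExP (fun om => l * X om) = l * ExP X.
Proof.
move=> HX Hl; case: (rep_dep X HX) => K H.
have H' : depK K (fun om => l * X om) by move=> om om' E; rewrite (H om om' E).
rewrite (ExP_eq _ _ H) (ExP_eq _ _ H'); exact: ItrR_scal.
Qed.

Definition ProdSLE : SLE :=
  {| Omega := Om Sb; Hsp := isrep; Ex := ExP;
     Hsp_add := rep_add; Hsp_scal := rep_scal; Hsp_lip := rep_lip;
     Ex_mono := ExP_mono; Ex_const := ExP_const; Ex_subadd := ExP_subadd;
     Ex_poshom := ExP_poshom |}.

End Rep.

From Stdlib Require Import Reals Lra Classical ClassicalEpsilon FunctionalExtensionality List Lia.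
From mathcomp Require Import all_boot zify.
Set Implicit Arguments. Unset Strict Implicit. Unset Printing Implicit Defensive.
Local Open Scope R_scope.

Definition sinc k (s : 'I_k -> R) := forall i j : 'I_k, (i < j)%N -> s i < s j.

Fixpoint lmaxd (d : R) (l : list R) : R :=
  match l with nil => d | x :: l => Rmax x (lmaxd d l) end.

Lemma lmax_ge d l x : In x (d :: l) -> x <= lmaxd d l.
Proof.
elim: l => [|a l IH] /=; first by case => [->|//]; apply: Rle_refl.
move=> H; have := Rmax_l a (lmaxd d l); have := Rmax_r a (lmaxd d l).
case: H => [E|[E|H]].
- have := IH (or_introl E); lra.
- rewrite -E; lra.
- have := IH (or_intror H); lra.
Qed.

Lemma lmax_in d l : In (lmaxd d l) (d :: l).
Proof.
elim: l => [|a l IH] /=; first by left.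
rewrite /Rmax; case: Rle_dec => _; last by right; left.
case: IH => [E|H]; [left; exact: E | right; right; exact: H].
Qed.

Definition ltb (m x : R) : bool := if Rlt_dec x m then true else false.

Lemma filter_len (f : R -> bool) l : (length (List.filter f l) <= length l)%coq_nat.
Proof. elim: l => [|a l IH] /=; [lia|case: (f a) => /=; lia]. Qed.

Lemma filter_len_lt (f : R -> bool) l x : In x l -> f x = false ->
  (length (List.filter f l) < length l)%coq_nat.
Proof.
elim: l => [//|a l IH] /= [->|H] Hf.
- rewrite Hf; have := filter_len f l; lia.
- case: (f a) => /=; have := IH H Hf; lia.
Qed.

Lemma sort_rep_list : forall l : list R, exists k (s : 'I_k -> R),
  sinc s /\ (forall x, In x l -> exists j, x = s j) /\ (forall j, In (s j) l).
Proof.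
have : forall n (l : list R), (length l <= n)%coq_nat -> exists k (s : 'I_k -> R),
  sinc s /\ (forall x, In x l -> exists j, x = s j) /\ (forall j, In (s j) l).
  elim=> [|n IH] l Hl.
  - case: l Hl => [|a l] /= Hl; last lia.
    exists 0%N, (fun _ => 0); split; [by case|split; [by []|by case]].
  - case: l Hl => [|a0 l1] Hl.
      exists 0%N, (fun _ => 0); split; [by case|split; [by []|by case]].
    set l := a0 :: l1.
    set m := lmaxd a0 l1.
    have Hm : In m l by apply: lmax_in.
    set l' := List.filter (ltb m) l.
    have Hlen : (length l' <= n)%coq_nat.
      have Hf : ltb m m = false by rewrite /ltb; case: Rlt_dec => [H|H] //; lra.
      move: (filter_len_lt Hm Hf) Hl; rewrite -/l' /=; lia.
    have [k [s' [Hs1 [Hs2 Hs3]]]] := IH l' Hlen.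
    have Hs'm : forall j, s' j < m.
      move=> j; have := Hs3 j; rewrite /l' filter_In /ltb; case: Rlt_dec => [H|H] [_ E] //.
    exists k.+1, (fun i : 'I_k.+1 => match insub (nat_of_ord i) with Some o => s' o | None => m end).
    split; [|split].
    + move=> i j Hij.
      case: insubP => [o Ho Eo|Hno]; case: insubP => [o' Ho' Eo'|Hno'].
      * apply: Hs1; by rewrite Eo Eo'.
      * exact: Hs'm.
      * exfalso; have := ltn_ord o'; move: Hno Hij; rewrite -Eo'; lia.
      * exfalso; have := ltn_ord j; move: Hno Hno' Hij; lia.
    + move=> x Hx.
      case: (Rlt_dec x m) => Hxm.
      * have Hx' : In x l' by rewrite /l' filter_In /ltb; case: Rlt_dec.
        have [j ->] := Hs2 x Hx'.
        exists (widen_ord (leqnSn k) j); case: insubP => [o _ Eo|]; last by rewrite /= ltn_ord.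
        by congr (s' _); apply: val_inj.
      * exists ord_max; case: insubP => [o _ Eo|_] /=; last by have := lmax_ge Hx; rewrite -/m; lra.
        by move: (ltn_ord o); rewrite Eo ltnn.
    + move=> j; case: insubP => [o _ _|_] //.
      by have := Hs3 o; rewrite /l' filter_In; case.
move=> H l; exact: (H (length l) l (le_n _)).
Qed.

Lemma mem_In (T : eqType) (x : T) (s : seq T) : x \in s -> In x s.
Proof. elim: s => [//|a s IH]; rewrite inE => /orP [/eqP ->|H] /=; [by left|right; exact: IH]. Qed.

Lemma sort_rep n (t : 'I_n -> R) : exists k (s : 'I_k -> R),
  sinc s /\ (forall i, exists j, t i = s j) /\ (forall j, exists i, s j = t i).
Proof.
have [k [s [H1 [H2 H3]]]] := sort_rep_list (List.map t (enum 'I_n)).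
exists k, s; split; [by []|split].
- move=> i; apply: H2; apply: in_map; apply: mem_In; by rewrite mem_enum.
- move=> j; have := H3 j; rewrite in_map_iff => [[i [E _]]]; by exists i.
Qed.

Lemma lipP_proj (I : Type) (i : I) : lipP (fun z : I -> R => z i) 1.
Proof. move=> x y d _ H; rewrite Rmult_1_l; exact: H. Qed.

Lemma lipP_const (I : Type) (c : R) : lipP (fun z : I -> R => c) 0.
Proof. move=> x y d _ _; rewrite Rminus_diag Rabs_R0 Rmult_0_l; exact: Rle_refl. Qed.

Lemma cblip_compv (I J : finType) (phi : (J -> R) -> R) (G : (I -> R) -> J -> R) :
  cblip phi -> (forall j, exists L, lipP (fun z => G z j) L) -> cblip (fun z => phi (G z)).
Proof.
move=> Hphi HG; apply: cblip_of.
- case: Hphi => [[B HB] _]; exists B => z; exact: HB.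
- case: (cblip_lip Hphi) => L [HL0 HL].
  exact: (lipP_comp (g := fun j z => G z j) HL HL0 HG).
Qed.

Lemma indep_map (S : SLE) (I J I' J' : finType) (X : I -> Omega S -> R) (Y : J -> Omega S -> R)
  (X' : I' -> Omega S -> R) (Y' : J' -> Omega S -> R)
  (g : I' -> (I -> R) -> R) (h : J' -> (J -> R) -> R) :
  indep X Y -> (forall i, exists L, lipP (g i) L) -> (forall j, exists L, lipP (h j) L) ->
  (forall i w, X' i w = g i (fun k => X k w)) -> (forall j w, Y' j w = h j (fun k => Y k w)) ->
  indep X' Y'.
Proof.
move=> HI Hg Hh EX EY phi Hphi.
pose G := fun (z : (I + J)%type -> R) =>
  vcat (fun i => g i (fun k => z (inl k))) (fun j => h j (fun k => z (inr k))).
have Hpsi : cblip (fun z => phi (G z)).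
  apply: cblip_compv => // [[i|j]] /=.
  - case: (Hg i) => L HL; exists L => x y d Hd Hxy; apply: HL => // k; exact: Hxy.
  - case: (Hh j) => L HL; exists L => x y d Hd Hxy; apply: HL => // k; exact: Hxy.
have E1 : forall w w', vcat (fun i => X' i w) (fun j => Y' j w') =
                       G (vcat (fun i => X i w) (fun j => Y j w')).
  move=> w w'; apply: functional_extensionality => [[i|j]] /=; [exact: EX | exact: EY].
rewrite (Ex_ext (Y := fun w => phi (G (vcat (fun i => X i w) (fun j => Y j w))))); last first.
  by move=> w; rewrite E1.
rewrite (HI _ Hpsi); apply: Ex_ext => w /=.
apply: Ex_ext => w'; by rewrite E1.
Qed.

Lemma ident_map (S1 S2 : SLE) (I I' : finType) (X1 : I -> Omega S1 -> R) (X2 : I -> Omega S2 -> R)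
  (Y1 : I' -> Omega S1 -> R) (Y2 : I' -> Omega S2 -> R) (g : I' -> (I -> R) -> R) :
  ident_vec X1 X2 -> (forall i, exists L, lipP (g i) L) ->
  (forall i w, Y1 i w = g i (fun k => X1 k w)) -> (forall i w, Y2 i w = g i (fun k => X2 k w)) ->
  ident_vec Y1 Y2.
Proof.
move=> HI Hg E1 E2 phi Hphi.
have Hpsi : cblip (fun z => phi (fun i => g i z)) by apply: cblip_compv.
rewrite (Ex_ext (Y := fun w => phi (fun i => g i (fun k => X1 k w)))); last first.
  by move=> w; congr phi; apply: functional_extensionality => i; apply: E1.
rewrite (HI _ Hpsi); apply: Ex_ext => w.
by congr phi; apply: functional_extensionality => i; rewrite E2.
Qed.

Definition incr (S : SLE) (D : finType) (X : process S D) (u v : R) : D -> Omega S -> R :=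
  fun i w => X v i w - X u i w.

Lemma sinc_le k (s : 'I_k -> R) (i j : 'I_k) : sinc s -> (i <= j)%N -> s i <= s j.
Proof.
move=> Hs; rewrite leq_eqVlt => /orP [/eqP E|H].
- have -> : i = j by apply: val_inj. exact: Rle_refl.
- left; exact: Hs.
Qed.

Lemma indep_gen (T : R -> Prop) (S : SLE) (D : finType) (X : process S D) n (t : 'I_n -> R) u v :
  indep_incr T X -> (forall i, T (t i)) -> (forall i, t i <= u) -> T u -> T v -> u < v ->
  indep (fdvec X t) (incr X u v).
Proof.
move=> [HP [H0 HI]] Ht Htu Tu Tv Huv.
pose t' := fun i : 'I_n.+1 => match insub (nat_of_ord i) with Some o => t o | None => u end.
have [k [s [Hs [Hs1 Hs2]]]] := sort_rep t'.
have Et'u : t' ord_max = u by rewrite /t'; case: insubP => [o _ Eo|//]; move: (ltn_ord o); rewrite Eo ltnn.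
have Et't : forall i, t' (widen_ord (leqnSn n) i) = t i.
  move=> i; rewrite /t'; case: insubP => [o _ Eo|]; last by rewrite /= ltn_ord.
  by congr t; apply: val_inj.
case: k s Hs Hs1 Hs2 => [|k] s Hs Hs1 Hs2; first by case: (Hs1 ord_max) => [[]].
have Esu : s ord_max = u.
  case: (Hs2 ord_max) => i Ei; case: (Hs1 ord_max) => j Ej.
  apply: Rle_antisym.
  - rewrite Ei; rewrite /t'; case: insubP => [o _ _|_]; [exact: Htu | exact: Rle_refl].
  - rewrite -Et'u Ej; apply: (sinc_le Hs); rewrite -ltnS; exact: ltn_ord.
have Ts : forall i, T (s i).
  move=> i; case: (Hs2 i) => j ->; rewrite /t'; case: insubP => [o _ _|_] //.
have := HI k s v Ts Tv Hs; rewrite Esu => /(_ Huv) Hind.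
have [f Hf] : exists f : 'I_n -> 'I_k.+1, forall i, t i = s (f i).
  apply: (@fin_all_exists _ (fun _ => 'I_k.+1) (fun i j => t i = s j)) => i; rewrite -Et't; exact: Hs1.
apply: (indep_map (g := fun p z => z (f p.1, p.2)) (h := fun d z => z d) Hind).
- move=> p; exists 1; exact: (lipP_proj (f p.1, p.2)).
- move=> d; exists 1; exact: lipP_proj.
- by move=> [i d] w; rewrite /fdvec /= Hf.
- by [].
Qed.

Lemma cblip_vcat_r (I J : finType) (psi : ((I + J)%type -> R) -> R) (x : I -> R) :
  cblip psi -> cblip (fun y : J -> R => psi (vcat x y)).
Proof.
move=> H; apply: (cblip_compv (G := fun y => vcat x y)) => // [[i|j]] /=.
- exists 0; exact: lipP_const.
- exists 1; exact: lipP_proj.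
Qed.

Lemma Ex_param_vcat (S : SLE) (I J : finType) (psi : ((I + J)%type -> R) -> R)
  (Y : J -> Omega S -> R) :
  cblip psi -> (forall j, Hsp S (Y j)) ->
  cblip (fun a : I -> R => Ex S (fun w => psi (vcat a (fun j => Y j w)))).
Proof.
move=> Hpsi HY; apply: Ex_param.
- move=> a; apply: (Hsp_ext (X := fun w => psi (fun q => match q with inl i => a i | inr j => Y j w end))).
  + apply: (Hsp_lipI (Z := fun q w => match q with inl i => a i | inr j => Y j w end)) => // [[i|j]].
    * exact: Hsp_const.
    * exact: HY.
  + move=> w; congr psi; by apply: functional_extensionality => [[i|j]].
- case: Hpsi => [[B HB] _]; exists B => a w; exact: HB.
- case: (cblip_lip Hpsi) => L [HL0 HL]; exists L => a a' d Hd Had w.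
  apply: HL => // [[i|j]] /=; first exact: Had.
  by rewrite Rminus_diag Rabs_R0.
Qed.

Lemma lipP_add2 (I : Type) (f g : (I -> R) -> R) Lf Lg :
  lipP f Lf -> lipP g Lg -> lipP (fun z => f z + g z) (Lf + Lg).
Proof.
move=> Hf Hg x y d Hd Hxy.
have -> : f x + g x - (f y + g y) = (f x - f y) + (g x - g y) by ring.
apply: Rle_trans (Rabs_triang _ _) _.
have := Hf x y d Hd Hxy; have := Hg x y d Hd Hxy; lra.
Qed.

Lemma fdd_sorted (S1 S2 : SLE) (D : finType) (X1 : process S1 D) (X2 : process S2 D) :
  indep_incr Tpos X1 -> indep_incr Tpos X2 ->
  (forall u v, 0 <= u -> u < v -> ident_vec (incr X1 u v) (incr X2 u v)) ->
  forall k (s : 'I_k -> R), sinc s -> (forall i, 0 <= s i) ->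
  ident_vec (fdvec X1 s) (fdvec X2 s).
Proof.
move=> H1 H2 Hinc; elim=> [|k IH] s Hs Hpos.
  move=> phi Hphi.
  have E : forall (S : SLE) (X : process S D) w, (fun p => fdvec X s p w) = (fun _ => 0).
    by move=> S X w; apply: functional_extensionality => [[[]]].
  rewrite (Ex_ext (Y := fun _ => phi (fun _ => 0))); last by move=> w; rewrite E.
  rewrite [in RHS](Ex_ext (Y := fun _ => phi (fun _ => 0))); last by move=> w; rewrite E.
  by rewrite !Ex_const.
case: k IH s Hs Hpos => [|k] IH s Hs Hpos phi Hphi.
- have Hs0 : forall i : 'I_1, s i = s ord0 by move=> i; rewrite (ord1 i).
  case: (Rle_lt_or_eq_dec 0 (s ord0) (Hpos ord0)) => [Hlt|Heq].
  + apply: (ident_map (g := fun p z => z p.2) (Hinc 0 (s ord0) (Rle_refl 0) Hlt)) => //.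
    * move=> p; exists 1; exact: lipP_proj.
    * move=> [i d] w; rewrite /fdvec /incr /= Hs0; case: H1 => [_ [H0 _]]; rewrite H0; ring.
    * move=> [i d] w; rewrite /fdvec /incr /= Hs0; case: H2 => [_ [H0 _]]; rewrite H0; ring.
  + have E : forall (S : SLE) (X : process S D), (forall i w, X 0 i w = 0) ->
        forall w, (fun p => fdvec X s p w) = (fun _ => 0).
      move=> S X HX w; apply: functional_extensionality => [[i d]].
      by rewrite /fdvec /= Hs0 -Heq HX.
    case: H1 => [_ [H10 _]]; case: H2 => [_ [H20 _]].
    rewrite (Ex_ext (Y := fun _ => phi (fun _ => 0))); last by move=> w; rewrite E.
    rewrite [in RHS](Ex_ext (Y := fun _ => phi (fun _ => 0))); last by move=> w; rewrite E.
    by rewrite !Ex_const.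
- pose s' := fun i : 'I_k.+1 => s (widen_ord (leqnSn _) i).
  pose u := s' ord_max; pose v := s ord_max.
  have Hs' : sinc s' by move=> i j Hij; apply: Hs.
  have Hpos' : forall i, 0 <= s' i by move=> i; apply: Hpos.
  have Huv : u < v by apply: Hs => /=.
  pose G := fun (z : (('I_k.+1 * D) + D)%type -> R) (p : 'I_k.+2 * D) =>
    match insub (nat_of_ord p.1) with
    | Some o => z (inl (o, p.2))
    | None => z (inl (ord_max, p.2)) + z (inr p.2) end.
  have HG : forall p, exists L, lipP (fun z => G z p) L.
    move=> p; rewrite /G; case: (insub _) => [o|].
    + exists 1; exact: lipP_proj.
    + exists (1 + 1); apply: lipP_add2; exact: lipP_proj.
  have Hpsi : cblip (fun z => phi (G z)) by apply: cblip_compv.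
  have HE : forall (S : SLE) (X : process S D) w,
      (fun p => fdvec X s p w) = G (vcat (fun p => fdvec X s' p w) (fun d => incr X u v d w)).
    move=> S X w; apply: functional_extensionality => [[i d]].
    rewrite /G /fdvec /=; case: insubP => [o _ Eo|Hno] /=.
    + congr (X (s _) d w); apply: val_inj => /=; by rewrite Eo.
    + have Ei : i = ord_max.
        apply: val_inj => /=; have := ltn_ord i; move: Hno; lia.
      rewrite Ei /incr /u /v; ring.
  pose F := fun (S : SLE) (X : process S D) (x : ('I_k.+1 * D) -> R) =>
    Ex S (fun w' => phi (G (vcat x (fun d => incr X u v d w')))).
  have Hind1 : indep (fdvec X1 s') (incr X1 u v) by case: H1 => [_ [_ H]]; exact: (H k s' v Hpos' (Hpos _) Hs' Huv).
  have Hind2 : indep (fdvec X2 s') (incr X2 u v) by case: H2 => [_ [_ H]]; exact: (H k s' v Hpos' (Hpos _) Hs' Huv).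
  have St1 : Ex S1 (fun w => phi (fun p => fdvec X1 s p w)) =
             Ex S1 (fun w => F S1 X1 (fun p => fdvec X1 s' p w)).
    rewrite (Ex_ext (Y := fun w => phi (G (vcat (fun p => fdvec X1 s' p w) (fun d => incr X1 u v d w))))).
    + exact: (Hind1 _ Hpsi).
    + by move=> w; rewrite HE.
  have St4 : Ex S2 (fun w => phi (fun p => fdvec X2 s p w)) =
             Ex S2 (fun w => F S2 X2 (fun p => fdvec X2 s' p w)).
    rewrite (Ex_ext (Y := fun w => phi (G (vcat (fun p => fdvec X2 s' p w) (fun d => incr X2 u v d w))))).
    + exact: (Hind2 _ Hpsi).
    + by move=> w; rewrite HE.
  have EF : F S1 X1 = F S2 X2.
    apply: functional_extensionality => x; rewrite /F.
    apply: (Hinc u v (Hpos' _) Huv (fun y => phi (G (vcat x y)))).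
    exact: (cblip_vcat_r x Hpsi).
  have HF : cblip (F S1 X1).
    rewrite /F; apply: (Ex_param_vcat (psi := fun z => phi (G z))) => // d.
    case: H1 => [HP _]; apply: Hsp_sub; apply: HP; rewrite /Tpos.
    + apply: Rle_trans (Hpos' ord_max) _; left; exact: Huv.
    + exact: Hpos'.
  rewrite St1 St4 -EF; exact: (IH s' Hs' Hpos' _ HF).
Qed.

Lemma fdd_eq (S1 S2 : SLE) (D : finType) (X1 : process S1 D) (X2 : process S2 D) :
  indep_incr Tpos X1 -> indep_incr Tpos X2 ->
  (forall u v, 0 <= u -> u < v -> ident_vec (incr X1 u v) (incr X2 u v)) ->
  ident_proc Tpos X1 X2.
Proof.
move=> H1 H2 Hinc n t Ht.
have [k [s [Hs [Hs1 Hs2]]]] := sort_rep t.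
have [f Hf] : exists f : 'I_n -> 'I_k, forall i, t i = s (f i).
  exact: (@fin_all_exists _ (fun _ => 'I_k) (fun i j => t i = s j)).
have Hpos : forall j, 0 <= s j by move=> j; case: (Hs2 j) => i ->; apply: Ht.
apply: (ident_map (g := fun p z => z (f p.1, p.2)) (fdd_sorted H1 H2 Hinc Hs Hpos)).
- move=> p; exists 1; exact: (lipP_proj (f p.1, p.2)).
- by move=> [i d] w; rewrite /fdvec /= Hf.
- by move=> [i d] w; rewrite /fdvec /= Hf.
Qed.

Lemma incr_concat (S1 S2 : SLE) (D : finType) (X1 : process S1 D) (X2 : process S2 D) u m v :
  indep_incr Tpos X1 -> indep_incr Tpos X2 -> 0 <= u -> u < m -> m < v ->
  ident_vec (incr X1 u m) (incr X2 u m) -> ident_vec (incr X1 m v) (incr X2 m v) ->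
  ident_vec (incr X1 u v) (incr X2 u v).
Proof.
move=> H1 H2 Hu Hum Hmv I1 I2 phi Hphi.
pose t := fun i : 'I_2 => if nat_of_ord i == 0%N then u else m.
have Ht : forall i, Tpos (t i) by move=> i; rewrite /t /Tpos; case: (_ == _); lra.
have Htm : forall i, t i <= m by move=> i; rewrite /t; case: (_ == _); lra.
have Tm : Tpos m by rewrite /Tpos; lra.
have Tv : Tpos v by rewrite /Tpos; lra.
have Hi1 := indep_gen H1 Ht Htm Tm Tv Hmv.
have Hi2 := indep_gen H2 Ht Htm Tm Tv Hmv.
pose psi := fun z : (('I_2 * D) + D)%type -> R =>
  phi (fun d => z (inl (ord_max, d)) - z (inl (ord0, d)) + z (inr d)).
have Hpsi : cblip psi.
  apply: (cblip_compv (G := fun z d => z (inl (ord_max, d)) - z (inl (ord0, d)) + z (inr d))) => // d.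
  exists (1 + 1 + 1); apply: lipP_add2; last exact: lipP_proj.
  apply: (lipP_add2 (f := fun z => z (inl (ord_max, d))) (g := fun z => - z (inl (ord0, d)))).
  - exact: lipP_proj.
  - move=> x y e He Hxy.
    have -> : - x (inl (ord0, d)) - - y (inl (ord0, d)) = - (x (inl (ord0, d)) - y (inl (ord0, d))) by ring.
    rewrite Rabs_Ropp; exact: (lipP_proj (inl (ord0, d)) He Hxy).
pose H := fun (S : SLE) (X : process S D) (y : D -> R) =>
  Ex S (fun w' => phi (fun d => y d + incr X m v d w')).
have St : forall (S : SLE) (X : process S D), indep (fdvec X t) (incr X m v) ->
    Ex S (fun w => phi (fun d => incr X u v d w)) = Ex S (fun w => H S X (fun d => incr X u m d w)).
  move=> S X HI.
  rewrite (Ex_ext (Y := fun w => psi (vcat (fun p => fdvec X t p w) (fun d => incr X m v d w)))).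
  + rewrite (HI _ Hpsi); apply: Ex_ext => w /=; apply: Ex_ext => w'.
    rewrite /psi /=; congr phi; apply: functional_extensionality => d.
    try (rewrite /fdvec /t /incr /vcat /=; ring).
  + move=> w; rewrite /psi /=; congr phi; apply: functional_extensionality => d.
    rewrite /fdvec /t /incr /vcat /=; ring.
have EH : H S1 X1 = H S2 X2.
  apply: functional_extensionality => y; rewrite /H.
  apply: (I2 (fun z => phi (fun d => y d + z d))).
  apply: (cblip_compv (G := fun z d => y d + z d)) => // d.
  exists 1; move=> x x' e He Hxx.
  have -> : y d + x d - (y d + x' d) = x d - x' d by ring.
  exact: (lipP_proj d He Hxx).
have HH : cblip (H S1 X1).
  have := Ex_param_vcat (psi := fun z : (D + D)%type -> R => phi (fun d => z (inl d) + z (inr d)))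
     (Y := incr X1 m v).
  rewrite /H; apply.
  - apply: (cblip_compv (G := fun z d => z (inl d) + z (inr d))) => // d.
    exists (1 + 1); apply: lipP_add2; exact: lipP_proj.
  - move=> d; case: H1 => [HP _]; apply: Hsp_sub; apply: HP => //.
rewrite (St _ _ Hi1) (St _ _ Hi2) -EH; exact: (I1 _ HH).
Qed.

From Stdlib Require Import Reals Lra Classical ClassicalEpsilon FunctionalExtensionality.
From mathcomp Require Import all_boot zify.
Set Implicit Arguments. Unset Strict Implicit. Unset Printing Implicit Defensive.
Local Open Scope R_scope.

Definition clamp (x : R) := Rmin 1 (Rmax 0 x).
Lemma clamp_le0 x : x <= 0 -> clamp x = 0.
Proof. rewrite /clamp /Rmin /Rmax => H; repeat destruct Rle_dec; lra. Qed.
Lemma clamp_ge1 x : 1 <= x -> clamp x = 1.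
Proof. rewrite /clamp /Rmin /Rmax => H; repeat destruct Rle_dec; lra. Qed.
Lemma clamp_id x : 0 <= x <= 1 -> clamp x = x.
Proof. rewrite /clamp /Rmin /Rmax => H; repeat destruct Rle_dec; lra. Qed.
Lemma clamp_in x : 0 <= clamp x <= 1.
Proof. rewrite /clamp /Rmin /Rmax; repeat destruct Rle_dec; lra. Qed.

Definition Nof (t : R) : nat := proj1_sig (constructive_indefinite_description _ (INR_unbounded t)).
Lemma Nof_gt t : t < INR (Nof t).
Proof. rewrite /Nof; case: constructive_indefinite_description => n /=; lra. Qed.

Lemma INR_addn m n : INR (m + n)%N = INR m + INR n.
Proof. by rewrite -plusE plus_INR. Qed.
Lemma INR_leq m n : (m <= n)%N -> INR m <= INR n.
Proof. move/leP; exact: le_INR. Qed.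
Lemma INR_lt_nat m n : INR m < INR n -> (m < n)%N.
Proof. move/INR_lt => H; apply/ltP. exact: H. Qed.
Lemma INR_le_nat m n : INR m <= INR n -> (m <= n)%N.
Proof. move/INR_le => H. by apply/leP. Qed.

Lemma floor_ex u : 0 <= u -> exists J : nat, INR J <= u < INR J + 1.
Proof.
move=> Hu; case: (INR_unbounded u) => n Hn.
elim: n Hn => [|n IH] Hn; first by rewrite /= in Hn; lra.
case: (Rlt_le_dec u (INR n)) => H; first exact: IH.
exists n; rewrite S_INR in Hn; lra.
Qed.

Lemma sumR_tail (f : nat -> R) K M : (K <= M)%N -> (forall j, (K <= j)%N -> (j < M)%N -> f j = 0) ->
  sumR f M = sumR f K.
Proof.
move=> HKM H; rewrite -(subnKC HKM) sumR_split (@sumR_zero (fun j => f (K + j)%N)) ?Rplus_0_r //.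
move=> j Hj; apply: H; lia.
Qed.

Lemma sumR_sub f g n : sumR f n - sumR g n = sumR (fun j => f j - g j) n.
Proof. elim: n => [|n IH] /=; [ring | rewrite -IH; ring]. Qed.

Lemma clamp_le x y : 0 <= y -> x <= y -> clamp x <= y.
Proof. rewrite /clamp /Rmin /Rmax => H1 H2; repeat destruct Rle_dec; lra. Qed.
Lemma clamp_gt x y : 0 <= x -> x < 1 -> x < y -> x < clamp y.
Proof. rewrite /clamp /Rmin /Rmax => H1 H2 H3; repeat destruct Rle_dec; lra. Qed.
Lemma lipP_shift (I : Type) (c : R) (i : I) : lipP (fun z : I -> R => c + z i) 1.
Proof.
move=> x y e He H; have -> : c + x i - (c + y i) = x i - y i by ring.
exact: (lipP_proj i He H).
Qed.

Section MNsec.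
Local Unset Implicit Arguments.
Variable d : nat.
Variable Sbar : nat -> SLE.
Variable XY : forall i : nat, process (Sbar i) 'I_(d + d).
Hypothesis HXY : forall i, indep_incr Tunit (XY i).
Variable b : Om Sbar.

Definition PS := ProdSLE Sbar b.

Definition piece (t : R) (j : nat) (k : 'I_(d + d)) (om : Om Sbar) : R :=
  XY j (clamp (t - INR j)) k (om j).

Definition MN : process PS 'I_(d + d) :=
  fun t k om => sumR (fun j => piece t j k om) (Nof t).

Lemma XY0 j k w : XY j 0 k w = 0.
Proof. by case: (HXY j) => [_ [H _]]. Qed.

Lemma piece_zero t j k om : t <= INR j -> piece t j k om = 0.
Proof. move=> H; rewrite /piece clamp_le0 ?XY0 //; lra. Qed.

Lemma MN_sumK t K k om : t <= INR K -> MN t k om = sumR (fun j => piece t j k om) K.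
Proof.
move=> HK; rewrite /MN.
have H1 := Nof_gt t.
rewrite -(@sumR_tail _ (Nof t) (maxn (Nof t) K)) ?leq_maxl //; last first.
  move=> j Hj _; apply: piece_zero; apply: Rlt_le; apply: Rlt_le_trans H1 _; exact: INR_leq.
rewrite (@sumR_tail _ K (maxn (Nof t) K)) ?leq_maxr //.
move=> j Hj _; apply: piece_zero; apply: Rle_trans HK _; exact: INR_leq.
Qed.

Lemma MN0 k om : MN 0 k om = 0.
Proof. by rewrite (@MN_sumK 0 0) //=; apply: Rle_refl. Qed.

Lemma HspXY j t k : 0 <= t <= 1 -> Hsp (Sbar j) (XY j t k).
Proof. case: (HXY j) => [HP _] Ht; exact: HP. Qed.

Lemma rep_sumR (f : nat -> Om Sbar -> R) n : (forall j, isrep Sbar (f j)) ->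
  isrep Sbar (fun om => sumR (fun j => f j om) n).
Proof.
move=> H; elim: n => [|n IH] /=.
- apply: (rep_ext Sbar (fun _ => 0)); last by [].
  exact: (Hsp_const PS 0).
- exact: rep_add.
Qed.

Lemma rep_piece t j k : isrep Sbar (piece t j k).
Proof. apply: (rep_coord Sbar b j (fun w => XY j (clamp (t - INR j)) k w)); apply: HspXY; exact: clamp_in. Qed.

Lemma MN_proc : is_process Tpos MN.
Proof. move=> t _ k; apply: rep_sumR => j; exact: rep_piece. Qed.


Lemma Ex_coord j (g : Omega (Sbar j) -> R) : Ex PS (fun om => g (om j)) = Ex (Sbar j) g.
Proof.
rewrite /PS /= (ExP_eq Sbar b j.+1).
- rewrite -addn1 ItrR_split add0n /=.
  have -> : T j (fun om => g (om j)) = (fun _ => Ex (Sbar j) g).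
    apply: functional_extensionality => om; rewrite /T; apply: Ex_ext => w; by rewrite upd_eq.
  apply: ItrR_nodep => om om' _ //.
- move=> om om' E; by rewrite E.
Qed.

Lemma MN_window t j k om : INR j <= t <= INR j + 1 ->
  MN t k om = sumR (fun i => XY i 1 k (om i)) j + XY j (t - INR j) k (om j).
Proof.
move=> Ht; rewrite (MN_sumK t j.+1); last by rewrite S_INR; lra.
rewrite /= /piece clamp_id; last lra.
congr (_ + _); apply: sumR_ext => i Hi; rewrite clamp_ge1 //.
have := INR_leq Hi; rewrite S_INR; lra.
Qed.

Lemma incr_window t1 t2 j k om : INR j <= t1 -> t1 <= t2 -> t2 <= INR j + 1 ->
  MN t2 k om - MN t1 k om = XY j (t2 - INR j) k (om j) - XY j (t1 - INR j) k (om j).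
Proof. move=> H1 H2 H3; rewrite (MN_window t1 j) ?(MN_window t2 j); try lra; ring. Qed.

Definition partp {S0 : SLE} (Z : process S0 'I_(d + d)) (m : 'I_d -> 'I_(d + d)) : process S0 'I_d :=
  fun t k w => Z t (m k) w.

Lemma window_ident (S1 : SLE) (M : process S1 'I_d) (m : 'I_d -> 'I_(d + d)) :
  (forall i : nat, ident_proc Tunit (partp (XY i) m) (shift_incr M (INR i))) ->
  forall j u v, INR j <= u -> u < v -> v <= INR j + 1 ->
  ident_vec (incr (partp MN m) u v) (incr M u v).
Proof.
move=> Hid j u v H1 H2 H3 phi Hphi.
pose Y1 := fun k w => XY j (v - INR j) (m k) w - XY j (u - INR j) (m k) w.
rewrite (@Ex_ext PS _ (fun om : Om Sbar => phi (fun k => Y1 k (om j)))); last first.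
  move=> om; congr phi; apply: functional_extensionality => k.
  rewrite /incr /partp /Y1; apply: incr_window; lra.
rewrite (Ex_coord j (fun w => phi (fun k => Y1 k w))).
pose t2 := fun i : 'I_2 => if nat_of_ord i == 0%N then u - INR j else v - INR j.
have Ht2 : forall i, Tunit (t2 i) by move=> i; rewrite /t2 /Tunit; case: (_ == _); lra.
have HI := Hid j 2%N t2 Ht2.
apply: (ident_map (g := fun k z => z (ord_max, k) - z (ord0, k)) HI) => //.
- move=> k; exists (1 + 1); apply: lipP_add2; first exact: lipP_proj.
  move=> x y e He Hxy.
  have -> : - x (ord0, k) - - y (ord0, k) = - (x (ord0, k) - y (ord0, k)) by ring.
  rewrite Rabs_Ropp; exact: (lipP_proj (ord0, k) He Hxy).
- move=> k w; rewrite /Y1 /incr /fdvec /partp /shift_incr /t2 /= ?Rplus_minus; ring.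
Qed.

Lemma incr_all (S1 : SLE) (M : process S1 'I_d) (m : 'I_d -> 'I_(d + d)) :
  indep_incr Tpos (partp MN m) -> indep_incr Tpos M ->
  (forall i : nat, ident_proc Tunit (partp (XY i) m) (shift_incr M (INR i))) ->
  forall u v, 0 <= u -> u < v -> ident_vec (incr (partp MN m) u v) (incr M u v).
Proof.
move=> HA HM Hid.
have Hw := window_ident S1 M m Hid.
have main : forall n j u v, INR j <= u -> u < v -> v <= INR (j + n) ->
    ident_vec (incr (partp MN m) u v) (incr M u v).
  elim=> [|n IH] j u v H1 H2 H3; first by rewrite addn0 in H3; lra.
  rewrite addnS S_INR in H3.
  case: (Rle_lt_dec v (INR (j + n))) => Hv; first exact: (IH j).
  case: (Rle_lt_dec (INR (j + n)) u) => Hu.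
  - apply: (Hw (j + n)%N) => //.
  - have H0 : 0 <= u by apply: Rle_trans H1; apply: pos_INR.
    apply: (incr_concat (m := INR (j + n)) HA HM H0 Hu Hv).
    + apply: (IH j) => //; lra.
    + apply: (Hw (j + n)%N) => //; lra.
move=> u v Hu Huv; apply: (main (Nof v) 0%N) => //; rewrite ?add0n; apply: Rlt_le; exact: Nof_gt.
Qed.

Lemma Ex_tail a n X om : depC (fun i => (a <= i)%N /\ (i < a + n)%N) X -> Ex PS X = ItrR a n X om.
Proof.
move=> H; rewrite /PS /= (ExP_eq Sbar b (a + n) X).
- rewrite ItrR_split add0n.
  have -> : ItrR a n X = fun _ => ItrR a n X om.
    apply: functional_extensionality => om'; exact: ItrR_const_pt.
  by rewrite ItrR_const.
- move=> om1 om2 E; apply: H => i [_ Hi]; exact: E.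
Qed.

Lemma Ex_split3 J m X : depK Sbar (J + (1 + m)) X -> Ex PS X = ItrR 0 J (T J (ItrR J.+1 m X)) b.
Proof. move=> H; by rewrite /PS /= (ExP_eq Sbar b _ X H) ItrR_split add0n add1n. Qed.

Lemma Ex_split2 J X : depK Sbar J.+1 X -> Ex PS X = ItrR 0 J (T J X) b.
Proof. move=> H; by rewrite /PS /= (ExP_eq Sbar b _ X H) -addn1 ItrR_split add0n. Qed.

Lemma MN_indep (k : nat) (s : 'I_k.+1 -> R) (v : R) :
  (forall i, Tpos (s i)) -> Tpos v -> (forall i j : 'I_k.+1, (i < j)%N -> s i < s j) ->
  s ord_max < v ->
  indep (fdvec MN s) (fun i w => MN v i w - MN (s ord_max) i w).
Proof.
move=> Hs Tv Hinc Huv.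
set u := s ord_max.
have Huv' : u < v by [].
have Hu0 : 0 <= u by apply: Hs.
have Hsu : forall i, s i <= u.
  move=> i; apply: (sinc_le Hinc); rewrite -ltnS; exact: ltn_ord.
have [J [HJ1 HJ2]] := floor_ex Hu0.
set K := Nof v.
have HvK : v < INR K by apply: Nof_gt.
have HJK : (J < K)%N by apply: INR_lt_nat; lra.
set m := (K - J.+1)%N.
have HK : K = (J + (1 + m))%N by rewrite /m; lia.
have HJS : INR J.+1 = INR J + 1 by rewrite S_INR.
pose A := fun (p : 'I_k.+1 * 'I_(d + d)) (om : Om Sbar) => sumR (fun j => piece (s p.1) j p.2 om) J.
pose Q := fun (p : 'I_k.+1 * 'I_(d + d)) (w : Omega (Sbar J)) => XY J (clamp (s p.1 - INR J)) p.2 w.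
pose Rr := fun (q : 'I_(d + d)) (w : Omega (Sbar J)) => XY J (clamp (v - INR J)) q w - XY J (u - INR J) q w.
pose W := fun (q : 'I_(d + d)) (om : Om Sbar) => sumR (fun j => piece v (J.+1 + j) q om) m.
pose Pv := fun om p => A p om + Q p (om J).
pose Dv := fun om q => Rr q (om J) + W q om.
have EP : forall p om, MN (s p.1) p.2 om = Pv om p.
  move=> [i q] om; rewrite (MN_sumK (s i) J.+1); last by have := Hsu i; lra.
  by [].
have EDelta : forall q om, MN v q om - MN u q om = Dv om q.
  move=> q om.
  rewrite (MN_sumK v K); last lra.
  rewrite (MN_sumK u K); last lra.
  rewrite HK !sumR_split.
  have E1 : sumR (fun j => piece v j q om) J = sumR (fun j => piece u j q om) J.
    apply: sumR_ext => j Hj; rewrite /piece !clamp_ge1 //.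
    - have := INR_leq Hj; rewrite S_INR; lra.
    - have := INR_leq Hj; rewrite S_INR; lra.
  have E4 : sumR (fun j => piece u (J + (1 + j))%N q om) m = 0.
    apply: sumR_zero => j _; apply: piece_zero.
    rewrite !INR_addn; have := pos_INR j; rewrite /=; lra.
  have E5 : sumR (fun j => piece v (J + (1 + j))%N q om) m = W q om.
    by apply: sumR_ext => j _; rewrite addnA addn1.
  rewrite E1 E4 E5 /Dv /Rr /= /piece addn0 (@clamp_id (u - INR J)); [ring|lra].
have HW : forall q, Hsp PS (W q).
  move=> q; apply: rep_sumR => j; exact: rep_piece.
have Wdep : forall q om om', (forall i, (J.+1 <= i)%N -> (i < J.+1 + m)%N -> om i = om' i) -> W q om = W q om'.
  move=> q om om' E; apply: sumR_ext => j Hj; rewrite /piece E //; lia.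
have Adep : forall p om om', (forall i, (i < J)%N -> om i = om' i) -> A p om = A p om'.
  move=> p om om' E; apply: sumR_ext => j Hj; rewrite /piece E //.
move=> phi Hphi.
pose Psi := fun (x : 'I_k.+1 * 'I_(d + d) -> R) (y : 'I_(d + d) -> R) =>
  Ex PS (fun om' => phi (vcat x (fun q => y q + W q om'))).
pose Gam := fun x => Ex (Sbar J) (fun w' => Psi x (fun q => Rr q w')).
have PsiT : forall x y om, Psi x y =
    ItrR J.+1 m (fun om' => phi (vcat x (fun q => y q + W q om'))) om.
  move=> x y om; apply: Ex_tail => om1 om2 E; congr phi; congr vcat.
  apply: functional_extensionality => q; congr (_ + _); apply: Wdep => i h1 h2; exact: E.
have HR : forall x, Ex PS (fun w' => phi (vcat x (fun q => MN v q w' - MN u q w'))) = Gam x.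
  move=> x.
  rewrite (@Ex_ext PS _ (fun om' => phi (vcat x (Dv om')))); last first.
    move=> om'; congr phi; congr vcat; apply: functional_extensionality => q; exact: EDelta.
  rewrite (Ex_split3 J m); last first.
    move=> om1 om2 E; congr phi; congr vcat; apply: functional_extensionality => q.
    rewrite /Dv /Rr E; last by rewrite HK in HJK; lia.
    congr (_ + _); apply: Wdep => i h1 h2; apply: E; rewrite -HK /K; lia.
  have E : T J (ItrR J.+1 m (fun om' => phi (vcat x (Dv om')))) = fun _ => Gam x.
    apply: functional_extensionality => om0; rewrite /T /Gam; apply: Ex_ext => w.
    transitivity (ItrR J.+1 m (fun om' => phi (vcat x (fun q => (fun q => Rr q (upd om0 J w J)) q + W q om'))) (upd om0 J w)).
      apply: (@ItrR_freeze Sbar ('I_(d + d) -> R) J.+1 m (fun (y : 'I_(d + d) -> R) om' => phi (vcat x (fun q => y q + W q om')))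
                (fun om' q => Rr q (om' J))).
      move=> om j w' h1 _; apply: functional_extensionality => q; rewrite upd_neq //; lia.
    by rewrite -PsiT upd_eq.
  by rewrite E ItrR_const.
have RHS : Ex PS (fun w => (fun x => Ex PS (fun w' => phi (vcat x (fun q => MN v q w' - MN u q w'))))
                            (fun i => fdvec MN s i w)) = Ex PS (fun om => Gam (Pv om)).
  apply: Ex_ext => w; transitivity (Gam (fun i => fdvec MN s i w)); first exact: HR.
  congr Gam; apply: functional_extensionality => p; exact: EP.
rewrite RHS.
pose F := fun om => phi (vcat (Pv om) (Dv om)).
rewrite (@Ex_ext PS _ F); last first.
  move=> om; congr phi; apply: functional_extensionality => [[p|q]] /=; [exact: EP | exact: EDelta].
have HJK' : (J < J + (1 + m))%N by lia.
have PvDep : forall om1 om2, (forall i, (i < J.+1)%N -> om1 i = om2 i) -> Pv om1 = Pv om2.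
  move=> om1 om2 E; apply: functional_extensionality => p; rewrite /Pv E //.
  congr (_ + _); apply: Adep => i Hi; apply: E; lia.
rewrite (Ex_split3 J m); last first.
  move=> om1 om2 E; rewrite /F (PvDep om1 om2); last by move=> i Hi; apply: E; lia.
  congr phi; congr vcat; apply: functional_extensionality => q.
  rewrite /Dv /Rr E //; congr (_ + _); apply: Wdep => i h1 h2; apply: E; lia.
rewrite (Ex_split2 J); last by move=> om1 om2 E; rewrite /= (PvDep om1 om2).
congr (ItrR 0 J _ b).
apply: functional_extensionality => om0; rewrite /T.
have EPu : forall w, Pv (upd om0 J w) = fun p => A p om0 + Q p w.
  move=> w; apply: functional_extensionality => p; rewrite /Pv upd_eq; congr (_ + _).
  apply: Adep => i Hi; rewrite upd_neq //; lia.
transitivity (Ex (Sbar J) (fun w => Psi (fun p => A p om0 + Q p w) (fun q => Rr q w))).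
  apply: Ex_ext => w.
  transitivity (ItrR J.+1 m (fun om' => phi (vcat (Pv (upd om0 J w)) (fun q => (fun q => Rr q (upd om0 J w J)) q + W q om'))) (upd om0 J w)).
    apply: (@ItrR_freeze Sbar (('I_k.+1 * 'I_(d + d) -> R) * ('I_(d + d) -> R)) J.+1 m
             (fun c om' => phi (vcat c.1 (fun q => c.2 q + W q om')))
             (fun om' => (Pv om', fun q => Rr q (om' J)))).
    move=> om j w' h1 _; congr pair.
    + apply: functional_extensionality => p; rewrite /Pv upd_neq; last lia.
      congr (_ + _); apply: Adep => i Hi; rewrite upd_neq //; lia.
    + apply: functional_extensionality => q; rewrite upd_neq //; lia.
  by rewrite -PsiT upd_eq EPu.
transitivity (Ex (Sbar J) (fun w => Gam (fun p => A p om0 + Q p w))); last first.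
  by apply: Ex_ext => w; rewrite EPu.
pose tJ := fun i : 'I_k.+1 => clamp (s i - INR J).
have HtJ : forall i, Tunit (tJ i) by move=> i; exact: clamp_in.
have HtJu : forall i, tJ i <= u - INR J by move=> i; apply: clamp_le; have := Hsu i; lra.
have Tu' : Tunit (u - INR J) by rewrite /Tunit; lra.
have Tv' : Tunit (clamp (v - INR J)) by exact: clamp_in.
have Huv2 : u - INR J < clamp (v - INR J) by apply: clamp_gt; lra.
have HI := indep_gen (HXY J) HtJ HtJu Tu' Tv' Huv2.
pose psi2 := fun zz : ((('I_k.+1 * 'I_(d + d)) + 'I_(d + d)) + 'I_(d + d))%type -> R =>
  phi (vcat (fun p => A p om0 + zz (inl (inl p))) (fun q => zz (inl (inr q)) + zz (inr q))).
have Hpsi2 : cblip psi2.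
  apply: (cblip_compv (G := fun zz => vcat (fun p => A p om0 + zz (inl (inl p))) (fun q => zz (inl (inr q)) + zz (inr q)))) => // [[p|q]] /=.
  - exists 1; exact: lipP_shift.
  - exists (1 + 1); apply: lipP_add2; exact: lipP_proj.
have Hpsi := Ex_param_vcat Hpsi2 HW.
exact: (HI _ Hpsi).
Qed.
End MNsec.

From Stdlib Require Import Reals Lra Classical ClassicalEpsilon FunctionalExtensionality.
From mathcomp Require Import all_boot.
Set Implicit Arguments. Unset Strict Implicit. Unset Printing Implicit Defensive.
Local Open Scope R_scope.

Lemma sle_point (S0 : SLE) : exists w : Omega S0, True.
Proof.
apply: NNPP => H.
have E : (fun _ : Omega S0 => 0) = (fun _ => 1).
  apply: functional_extensionality => w; case: H; by exists w.
have := Ex_const S0 0; have := Ex_const S0 1; rewrite E => ->; lra.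
Qed.

Lemma part_indep (T0 : R -> Prop) (S0 : SLE) (d : nat) (Z : process S0 'I_(d + d)) (m : 'I_d -> 'I_(d + d)) :
  indep_incr T0 Z -> indep_incr T0 (partp d Z m).
Proof.
move=> [HP [H0 HI]]; split; [|split].
- move=> t Ht k; exact: HP.
- move=> k w; exact: H0.
- move=> k s v Hs Hv Hinc Hlt.
  apply: (indep_map (g := fun p z => z (p.1, m p.2)) (h := fun q z => z (m q)) (HI k s v Hs Hv Hinc Hlt)).
  + move=> p; exists 1; exact: (lipP_proj (p.1, m p.2)).
  + move=> q; exists 1; exact: lipP_proj.
  + by [].
  + by [].
Qed.

Local Close Scope R_scope.
Unset Implicit Arguments.
Theorem mainTheorem2 (d : nat) (S1 S2 : SLE)
  (M : process S1 'I_d) (N : process S2 'I_d)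
  (Sbar : nat -> SLE) (XY : forall i : nat, process (Sbar i) 'I_(d + d)) :
  indep_incr Tpos M -> indep_incr Tpos N ->
  (forall i : nat, indep_incr Tunit (XY i)) ->
  (forall i : nat, ident_proc Tunit (lpart (XY i)) (shift_incr M (INR i))) ->
  (forall i : nat, ident_proc Tunit (rpart (XY i)) (shift_incr N (INR i))) ->
  exists (S : SLE) (MN : process S 'I_(d + d)),
    indep_incr Tpos MN /\
    ident_proc Tpos (lpart MN) M /\
    ident_proc Tpos (rpart MN) N.
Proof.
move=> HM HN HXY HL HR.
pose b : Om Sbar := fun i => proj1_sig (constructive_indefinite_description _ (sle_point (Sbar i))).
have HMN : indep_incr Tpos (MN d Sbar XY b).
  split; [|split].
  - exact: (MN_proc d Sbar XY HXY b).
  - move=> k w; exact: (MN0 d Sbar XY HXY b).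
  - move=> k s v Hs Hv Hinc Hlt; exact: (MN_indep d Sbar XY HXY b k s v Hs Hv Hinc Hlt).
exists (PS Sbar b), (MN d Sbar XY b); split => //; split.
- have HA := part_indep (lshift d) HMN.
  apply: (fdd_eq HA HM).
  exact: (incr_all d Sbar XY HXY b S1 M (lshift d) HA HM HL).
- have HA := part_indep (fun i : 'I_d => rshift d i) HMN.
  apply: (fdd_eq HA HN).
  exact: (incr_all d Sbar XY HXY b S2 N (fun i : 'I_d => rshift d i) HA HN HR).
Qed.
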